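(* Let $\mathbf{A}\in\mathbb{R}^{m\times n}$ with columns $\mathbf{a}_1,\dots,\mathbf{a}_n$, let $\mathbf{y}\in\mathbb{R}^m$, and let $f(\cdot\,;y):\mathbb{R}\to\mathbb{R}$ be, for each $y$, proper, lower semi-continuous, convex and differentiable with $(1/\alpha)$-Lipschitz derivative $f'$ for some $\alpha>0$. Set $F(\mathbf{z};\mathbf{y})=\sum_{i=1}^m f(z_i;y_i)$ for $\mathbf{z}\in\mathbb{R}^m$ and let $\nabla F(\mathbf{z};\mathbf{y})$ denote its gradient with respect to $\mathbf{z}$. Consider the non-negative linear regression problem $$\mathbf{x}^\star\in\arg\min_{\mathbf{x}\in\mathbb{R}^n,\ \mathbf{x}\ge 0}\ \sum_{i=1}^m f([\mathbf{A}\mathbf{x}]_i;y_i)$$ and its dual $$\boldsymbol{\theta}^\star=\arg\max_{\boldsymbol{\theta}\in\mathcal{F}_D}\ -\sum_{i=1}^m f^*(-\theta_i;y_i),\qquad \mathcal{F}_D=\{\boldsymbol{\theta}\in\mathbb{R}^m:\mathbf{A}^T\boldsymbol{\theta}\le 0\},$$ where $f^*(\cdot\,;y)$ is the Fenchel conjugate of $f(\cdot\,;y)$. Assume the interior $\mathrm{Int}(\mathcal{F}_D)$ is nonempty and fix $\mathbf{t}\in\mathrm{Int}(\mathcal{F}_D)$. Define $\Xi_{\mathbf{t}}:\mathbb{R}^m\to\mathbb{R}^m$ by $$\Xi_{\mathbf{t}}(\mathbf{z})=\mathbf{z}+\Big(\max_{j\in[n]}\frac{\max(0,\mathbf{a}_j^T\mathbf{z})}{|\mathbf{a}_j^T\mathbf{t}|}\Big)\mathbf{t},$$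 and $\Theta(\mathbf{x})=\Xi_{\mathbf{t}}(-\nabla F(\mathbf{A}\mathbf{x};\mathbf{y}))$. Then for any primal point $\mathbf{x}\in\mathbb{R}^n_{\ge 0}$ we have $\Theta(\mathbf{x})\in\mathcal{F}_D$. Moreover, $\Theta(\mathbf{x})\to\boldsymbol{\theta}^\star$ as $\mathbf{x}\to\mathbf{x}^\star$.
   Context: $[n]=\{1,\dots,n\}$; vector inequalities are coordinate-wise. $f^*(u;y)=\sup_{z\in\mathbb{R}} zu-f(z;y)$. The dual solution $\boldsymbol{\theta}^\star$ is unique; $\mathbf{x}^\star$ denotes a primal solution. $\mathrm{Int}(\mathcal{F}_D)$ is the topological interior of $\mathcal{F}_D$ in $\mathbb{R}^m$. *)

(* Defs.v *)
From HB Require Import structures.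
From mathcomp Require Import all_boot all_order all_algebra.
From mathcomp Require Import all_classical all_reals all_analysis.
Set Implicit Arguments. Unset Strict Implicit. Unset Printing Implicit Defensive.
Import Order.TTheory GRing.Theory Num.Theory.
Import numFieldNormedType.Exports.
Local Open Scope classical_set_scope.
Local Open Scope ring_scope.

Section Defs.
Variable R : realType.

Definition convex_fun (g : R -> R) : Prop :=
  forall a b (l : R), 0 <= l <= 1 ->
    g (l * a + (1 - l) * b) <= l * g a + (1 - l) * g b.

Definition loss_assumptions (f : R -> R -> R) (alpha : R) : Prop :=
  0 < alpha /\
  forall y : R,
    convex_fun (fun z => f z y) /\
    (forall z, derivable (fun z => f z y) z 1) /\
    (forall z1 z2, `| derive1 (fun z => f z y) z1 - derive1 (fun z => f z y) z2 |
                     <= alpha^-1 * `|z1 - z2|).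

Definition fconj (f : R -> R -> R) (u y : R) : \bar R :=
  ereal_sup [set ((z * u - f z y)%:E) | z in setT].

Definition Fsum (m : nat) (f : R -> R -> R) (y : 'cV[R]_m) (z : 'cV[R]_m) : R :=
  \sum_(i < m) f (z i 0) (y i 0).

Definition gradF (m : nat) (f : R -> R -> R) (y : 'cV[R]_m) (z : 'cV[R]_m)
  : 'cV[R]_m :=
  \col_(i < m) derive (Fsum f y) z (delta_mx i 0 : 'cV[R]_m).

Definition nonneg_vec (k : nat) (x : 'cV[R]_k) : Prop := forall i, 0 <= x i 0.
Definition nonpos_vec (k : nat) (x : 'cV[R]_k) : Prop := forall i, x i 0 <= 0.

Definition primal_obj (m n : nat) (f : R -> R -> R) (A : 'M[R]_(m, n))
  (y : 'cV[R]_m) (x : 'cV[R]_n) : R := Fsum f y (A *m x).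

Definition dual_obj (m : nat) (f : R -> R -> R) (y : 'cV[R]_m)
  (theta : 'cV[R]_m) : \bar R :=
  (- \sum_(i < m) fconj f (- theta i 0%R)%R (y i 0%R))%E.

Definition dual_feasible (m n : nat) (A : 'M[R]_(m, n)) : set 'cV[R]_m :=
  [set theta | nonpos_vec (A^T *m theta)].

(* Xi_t(z) = z + (max_j max(0, a_j^T z) / |a_j^T t|) t ; a_j^T z = (A^T z)_j *)
Definition Xi (m n : nat) (A : 'M[R]_(m, n)) (t z : 'cV[R]_m) : 'cV[R]_m :=
  z + (\big[Num.max/0]_(j < n)
         (Num.max 0 ((A^T *m z) j 0) / `|(A^T *m t) j 0|)) *: t.

Definition Theta (m n : nat) (f : R -> R -> R) (A : 'M[R]_(m, n))
  (y t : 'cV[R]_m) (x : 'cV[R]_n) : 'cV[R]_m :=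
  Xi A t (- gradF f y (A *m x)).

End Defs.

(* Main.v *)
Require Import Defs.
From HB Require Import structures.
From mathcomp Require Import all_boot all_order all_algebra.
From mathcomp Require Import all_classical all_reals all_analysis.
From mathcomp Require Import ring lra.
Import Order.TTheory GRing.Theory Num.Theory.
Import numFieldNormedType.Exports.
Local Open Scope classical_set_scope.
Local Open Scope ring_scope.

Section S.
Variable R : realType.

Lemma mvt_le (g : R -> R) a b : a < b -> (forall z, derivable g z 1) ->
  exists2 c, a < c < b & g b - g a = derive1 g c * (b - a).
Proof.
move=> ab dg.
have [c cin ->] := @MVT R g (derive1 g) a b ab
  (fun x _ => ltac:(rewrite derive1E; exact: derivableP))
  (derivable_within_continuous (fun x _ => dg x)).
by exists c => //; move: cin; rewrite in_itv.
Qed.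

Lemma taylor_aux (K a b c : R) : 0 <= K -> `|a| <= K * `|b| -> `|b| <= `|c| ->
  `|a * c| <= K * c ^+ 2.
Proof.
move=> K0 h1 h2; rewrite normrM -(real_normK (num_real c)) expr2 mulrA.
apply: ler_wpM2r => //; apply: le_trans h1 _; exact: ler_wpM2l.
Qed.

Lemma taylor_bound (g : R -> R) (K : R) : (forall z, derivable g z 1) ->
  (forall z1 z2, `|derive1 g z1 - derive1 g z2| <= K * `|z1 - z2|) ->
  forall z w, `|g w - g z - derive1 g z * (w - z)| <= K * (w - z) ^+ 2.
Proof.
move=> dg lip z w.
have K0 : 0 <= K by have := lip 1 0; rewrite subr0 normr1 mulr1; apply: le_trans.
have [wz|zw|<-] := ltgtP w z; last by rewrite !subrr mulr0 subrr normr0 expr0n /= mulr0.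
- have [c /andP[c1 c2] E] := @mvt_le g _ _ wz dg.
  have -> : g w - g z - derive1 g z * (w - z) = (derive1 g c - derive1 g z) * (w - z).
    rewrite -[g w - g z]opprB E; ring.
  apply: taylor_aux => //.
  by rewrite distrC [X in _ <= X]distrC !ger0_norm; lra.
- have [c /andP[c1 c2] E] := @mvt_le g _ _ zw dg.
  have -> : g w - g z - derive1 g z * (w - z) = (derive1 g c - derive1 g z) * (w - z).
    rewrite E; ring.
  apply: taylor_aux => //.
  by rewrite !ger0_norm; lra.
Qed.

Lemma grad_ineq (g : R -> R) (K : R) : (forall z, derivable g z 1) ->
  (forall z1 z2, `|derive1 g z1 - derive1 g z2| <= K * `|z1 - z2|) ->
  convex_fun g ->
  forall z w, g z + derive1 g z * (w - z) <= g w.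
Proof.
move=> dg lip cvx z w.
have K0 : 0 <= K by have := lip 1 0; rewrite subr0 normr1 mulr1; apply: le_trans.
rewrite leNgt; apply/negP => hlt.
set d := derive1 g z in hlt *.
set e := w - z in hlt *.
set H := g w - g z - d * e.
have H0 : H < 0 by rewrite /H; lra.
set D := K * e ^+ 2 + 1.
have D0 : K * e ^+ 2 < D by rewrite /D; lra.
have Ke0 : 0 <= K * e ^+ 2 by rewrite mulr_ge0 // sqr_ge0.
have DH : 0 < D - H by lra.
set l := - H / (D - H).
have l0 : 0 < l by rewrite /l divr_gt0 //; lra.
have lDH : l * (D - H) = - H by rewrite /l divfK // gt_eqF.
have l1 : l <= 1.
  rewrite -(ler_pM2r DH) lDH mul1r; lra.
have := cvx w z l; rewrite ltW //= l1 => /(_ isT) hc.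
have := @taylor_bound g K dg lip z (l * w + (1 - l) * z).
have -> : l * w + (1 - l) * z - z = l * e by rewrite /e; ring.
rewrite ler_norml => /andP[hT _].
have key : l * H >= - (K * e ^+ 2) * l ^+ 2.
  have : l * g w + (1 - l) * g z - g z - d * (l * e) >= - (K * (l * e) ^+ 2).
    by apply: le_trans hT _; rewrite lerB // lerB.
  have -> : l * g w + (1 - l) * g z - g z - d * (l * e) = l * H by rewrite /H; ring.
  rewrite exprMn; have -> : K * (l ^+ 2 * e ^+ 2) = K * e ^+ 2 * l ^+ 2 by ring.
  by rewrite mulNr.
have key2 : H >= - (K * e ^+ 2) * l.
  rewrite -(ler_pM2l l0); move: key; rewrite expr2; nra.
have : (K * e ^+ 2) * l < D * l by rewrite ltr_pM2r.
have : l * H < 0 by rewrite pmulr_rlt0.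
lra.
Qed.

Lemma gradF_E m (f : R -> R -> R) (y z : 'cV[R]_m) i :
  gradF f y z i 0 = derive1 (fun w => f w (y i 0)) (z i 0).
Proof.
rewrite /gradF mxE /derive /derive1.
have -> : (fun h : R => h^-1 *: ((Fsum f y \o shift z) (h *: (delta_mx i 0 : 'cV[R]_m)) - Fsum f y z))
  = (fun h : R => h^-1 *: (f (h + z i 0) (y i 0) - f (z i 0) (y i 0))); last by [].
apply/funext => h /=.
congr (_ *: _).
rewrite /Fsum (bigD1 i) //= [X in _ - X](bigD1 i) //= !mxE eqxx mulr1.
rewrite opprD addrACA.
rewrite [X in _ + X](_ : _ = 0) ?addr0 //.
rewrite -sumrB big1 // => j /negbTE ji; rewrite !mxE ji mulr0 add0r subrr //.
Qed.

Lemma interior_zero m n (A : 'M[R]_(m, n)) (t : 'cV[R]_m) j :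
  interior (dual_feasible A) t -> (A^T *m t) j 0 = 0 -> forall i, A i j = 0.
Proof.
move=> /nbhs_ballP [r /= r0 sub] q0.
set v : 'cV[R]_m := \col_i A i j.
have v0 : 0 <= `|v| by [].
set e := r / (2 * (`|v| + 1)).
have e0 : 0 < e by rewrite /e divr_gt0 // mulr_gt0 //; lra.
have : dual_feasible A (t + e *: v).
  apply: sub; rewrite -ball_normE /= opprD addrA subrr add0r normrN normrZ.
  rewrite gtr0_norm // /e mulrAC ltr_pdivrMr; last by rewrite mulr_gt0 //; lra.
  nra.
move=> /(_ j); rewrite mulmxDr -scalemxAr mxE [X in X + _]q0 add0r mxE.
rewrite pmulr_rle0 // => hs.
have hs0 : \sum_i A i j ^+ 2 = 0.
  apply/le_anti; rewrite sumr_ge0 ?andbT => [|i _]; last exact: sqr_ge0.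
  apply: le_trans hs; rewrite le_eqVlt; apply/orP; left; apply/eqP.
  by rewrite mxE; apply: eq_bigr => i _; rewrite !mxE expr2.
move=> i; apply/eqP; rewrite -sqrf_eq0; apply/eqP.
by apply: (psumr_eq0P _ hs0) => // k _; exact: sqr_ge0.
Qed.

Lemma ATz_zero m n (A : 'M[R]_(m, n)) j (z : 'cV[R]_m) :
  (forall i, A i j = 0) -> (A^T *m z) j 0 = 0.
Proof. by move=> h; rewrite mxE big1 // => i _; rewrite mxE h mul0r. Qed.

Lemma Xi_feasible m n (A : 'M[R]_(m, n)) (t z : 'cV[R]_m) :
  interior (dual_feasible A) t -> dual_feasible A (Xi A t z).
Proof.
move=> ht j.
have tle : (A^T *m t) j 0 <= 0 by exact: (interior_subset ht).
rewrite /Xi mulmxDr -scalemxAr mxE [X in _ + X]mxE.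
set c := \big[Num.max/0]_(j0 < n) _.
have [qlt|qgt|q0] := ltgtP ((A^T *m t) j 0) 0; last first.
- by rewrite q0 mulr0 addr0 ATz_zero //; exact: interior_zero ht q0.
- by move: tle; rewrite leNgt qgt.
have hc : Num.max 0 ((A^T *m z) j 0) / `|(A^T *m t) j 0| <= c.
  exact: le_bigmax.
rewrite (ler0_norm (ltW qlt)) invrN mulrN -mulNr in hc.
have : c * (A^T *m t) j 0 <= - Num.max 0 ((A^T *m z) j 0).
  by rewrite -ler_ndivrMr.
have : (A^T *m z) j 0 <= Num.max 0 ((A^T *m z) j 0) by rewrite le_max lexx orbT.
lra.
Qed.

Lemma mul_delta_col m n (A : 'M[R]_(m, n)) j i :
  (A *m (delta_mx j 0 : 'cV[R]_n)) i 0 = A i j.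
Proof.
rewrite mxE (bigD1 j) //= mxE !eqxx mulr1 big1 ?addr0 // => k kj.
by rewrite mxE (negbTE kj) mulr0.
Qed.

Lemma primal_step m n (A : 'M[R]_(m, n)) (y : 'cV[R]_m) f alpha (x : 'cV[R]_n) j s :
  loss_assumptions f alpha ->
  primal_obj f A y (x + s *: delta_mx j 0) - primal_obj f A y x <=
  s * (A^T *m gradF f y (A *m x)) j 0 + s ^+ 2 * (alpha^-1 * \sum_i A i j ^+ 2).
Proof.
move=> [a0 hf].
rewrite /primal_obj /Fsum -sumrB mxE !mulr_sumr -big_split /=.
apply: ler_sum => i _.
have [_ [dg lip]] := hf (y i 0).
have E : (A *m (x + s *: delta_mx j 0)) i 0 = (A *m x) i 0 + s * A i j.
  by rewrite mulmxDr -scalemxAr mxE; congr (_ + _); rewrite mxE mul_delta_col.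
have := @taylor_bound _ _ dg lip ((A *m x) i 0) ((A *m (x + s *: delta_mx j 0)) i 0).
rewrite E; have -> : (A *m x) i 0 + s * A i j - (A *m x) i 0 = s * A i j by ring.
rewrite ler_norml => /andP[_ h].
rewrite gradF_E [A^T j i]mxE; set d := derive1 _ _ in h *.
have -> : s * (A i j * d) + s ^+ 2 * (alpha^-1 * A i j ^+ 2) = d * (s * A i j) + alpha^-1 * (s * A i j) ^+ 2 by ring.
lra.
Qed.

Lemma kkt m n (A : 'M[R]_(m, n)) (y : 'cV[R]_m) f alpha (xstar : 'cV[R]_n) :
  loss_assumptions f alpha -> nonneg_vec xstar ->
  (forall x : 'cV[R]_n, nonneg_vec x ->
     primal_obj f A y xstar <= primal_obj f A y x) ->
  forall j, 0 <= (A^T *m gradF f y (A *m xstar)) j 0 /\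
            xstar j 0 * (A^T *m gradF f y (A *m xstar)) j 0 = 0.
Proof.
move=> hl hx hopt j.
set g := (A^T *m _) j 0.
set Q := alpha^-1 * \sum_i A i j ^+ 2.
have Q0 : 0 <= Q.
  apply: mulr_ge0; [rewrite invr_ge0; exact: ltW hl.1 | apply: sumr_ge0 => i _; exact: sqr_ge0].
have step s : 0 <= xstar j 0 + s -> 0 <= s * g + s ^+ 2 * Q.
  move=> hs; have := @primal_step _ _ A y f alpha xstar j s hl.
  have := hopt (xstar + s *: delta_mx j 0) _.
  have : nonneg_vec (xstar + s *: delta_mx j 0).
    move=> k; rewrite !mxE; case: (eqVneq k j) => [->|kj]; first by rewrite eqxx mulr1.
    by rewrite /= mulr0 addr0; exact: hx.
  move=> /[swap] /[apply]; rewrite -/g -/Q; lra.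
have g0 : 0 <= g.
  rewrite leNgt; apply/negP => glt.
  set s := - g / (Q + 1).
  have Q1 : 0 < Q + 1 by lra.
  have s0 : 0 < s by rewrite /s divr_gt0 //; lra.
  have e : s * (Q + 1) = - g by rewrite /s divfK // gt_eqF.
  have := step s (addr_ge0 (hx j) (ltW s0)).
  rewrite expr2; nra.
split => //.
have [xj0|xjgt] := eqVneq (xstar j 0) 0; first by rewrite xj0 mul0r.
have xjp : 0 < xstar j 0 by rewrite lt_neqAle eq_sym xjgt hx.
have [gz|gp] := eqVneq g 0; first by rewrite gz mulr0.
have gpos : 0 < g by rewrite lt_neqAle eq_sym gp g0.
exfalso.
have Q1 : 0 < Q + 1 by lra.
set u := Num.min (xstar j 0) (g / (Q + 1)).
have u0 : 0 < u by rewrite /u lt_min xjp divr_gt0.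
have ux : u <= xstar j 0 by rewrite /u ge_min lexx.
have ug : u * (Q + 1) <= g by rewrite -ler_pdivlMr // /u ge_min lexx orbT.
have := step (- u); rewrite subr_ge0 ux => /(_ isT).
rewrite sqrrN expr2.
have : u * (u * (Q + 1)) <= u * g by rewrite ler_pM2l.
nra.
Qed.

Lemma conj_upper (f : R -> R -> R) (alpha yv z : R) : loss_assumptions f alpha ->
  (fconj f (derive1 (fun w => f w yv) z) yv <=
   (z * derive1 (fun w => f w yv) z - f z yv)%:E)%E.
Proof.
move=> [a0 hf]; have [cvx [dg lip]] := hf yv.
rewrite /fconj; apply: ge_ereal_sup => _ [w _ <-]; rewrite lee_fin.
have := @grad_ineq _ _ dg lip cvx z w.
set d := derive1 _ _; lra.
Qed.

Lemma conj_lower (f : R -> R -> R) (alpha yv z u : R) : loss_assumptions f alpha ->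
  ((z * u - f z yv + alpha / 4 * (u - derive1 (fun w => f w yv) z) ^+ 2)%:E
    <= fconj f u yv)%E.
Proof.
move=> [a0 hf]; have [cvx [dg lip]] := hf yv.
set d := derive1 _ _.
set w := z + alpha / 2 * (u - d).
apply: (@le_trans _ _ ((w * u - f w yv)%:E)); last first.
  by apply: ereal_sup_ubound; exists w.
rewrite lee_fin.
have := @taylor_bound _ _ dg lip z w; rewrite ler_norml => /andP[_ h].
rewrite -/d in h.
have ew : w - z = alpha / 2 * (u - d) by rewrite /w; ring.
rewrite ew in h.
have : alpha^-1 * (alpha / 2 * (u - d)) ^+ 2 = alpha / 4 * (u - d) ^+ 2.
  field; rewrite gt_eqF //.
move=> e2; rewrite e2 in h.
have : w * u = z * u + alpha / 2 * (u - d) * u by rewrite /w; ring.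
have : d * (alpha / 2 * (u - d)) = alpha / 2 * (u - d) * d by ring.
have : alpha / 2 * (u - d) * u - alpha / 2 * (u - d) * d = alpha / 2 * (u - d) ^+ 2 by ring.
have : alpha / 2 * (u - d) ^+ 2 = alpha / 4 * (u - d) ^+ 2 + alpha / 4 * (u - d) ^+ 2.
  by field.
lra.
Qed.

Lemma sum_Ax_w m n (A : 'M[R]_(m, n)) (x : 'cV[R]_n) (w : 'cV[R]_m) :
  \sum_i (A *m x) i 0 * w i 0 = \sum_j x j 0 * (A^T *m w) j 0.
Proof.
under eq_bigr do rewrite mxE mulr_suml.
rewrite exchange_big /=; apply: eq_bigr => j _.
rewrite mxE mulr_sumr; apply: eq_bigr => i _; rewrite mxE; ring.
Qed.

Lemma dual_unique m n (A : 'M[R]_(m, n)) (y : 'cV[R]_m) f alpha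
  (xstar : 'cV[R]_n) (thetastar : 'cV[R]_m) :
  loss_assumptions f alpha -> nonneg_vec xstar ->
  (forall x : 'cV[R]_n, nonneg_vec x ->
     primal_obj f A y xstar <= primal_obj f A y x) ->
  dual_feasible A thetastar ->
  (forall theta, dual_feasible A theta ->
     (dual_obj f y theta <= dual_obj f y thetastar)%E) ->
  thetastar = - gradF f y (A *m xstar).
Proof.
move=> hl hx hopt hfeas hmax.
have a0 := hl.1.
set G := gradF f y (A *m xstar).
set z := A *m xstar.
have hk := @kkt _ _ A y f alpha xstar hl hx hopt.
have feasG : dual_feasible A (- G).
  by move=> j; rewrite mulmxN mxE oppr_le0; case: (hk j).
have compl : \sum_i z i 0 * G i 0 = 0.
  by rewrite sum_Ax_w big1 // => j _; case: (hk j).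
have compl2 : \sum_i z i 0 * thetastar i 0 <= 0.
  rewrite sum_Ax_w; rewrite -oppr_ge0 -sumrN; apply: sumr_ge0 => j _.
  by rewrite -mulrN mulr_ge0 ?hx // oppr_ge0 hfeas.
have := hmax _ feasG; rewrite /dual_obj leeN2 => hle.
set u := fun i : 'I_m => - thetastar i 0.
set g := fun i : 'I_m => derive1 (fun w => f w (y i 0)) (z i 0).
have hG i : G i 0 = g i by rewrite /G gradF_E.
have hlow : (\sum_i (z i 0 * u i - f (z i 0) (y i 0) + alpha / 4 * (u i - g i) ^+ 2)%:E
     <= \sum_i (z i 0 * g i - f (z i 0) (y i 0))%:E)%E.
  apply: (le_trans _ (le_trans hle _)).
    by apply: lee_sum => i _; exact: (@conj_lower f alpha _ _ _ hl).
  apply: lee_sum => i _; rewrite mxE opprK hG; exact: (@conj_upper f alpha _ _ hl).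
rewrite !sumEFin lee_fin in hlow.
have hsq : \sum_i alpha / 4 * (u i - g i) ^+ 2 <= 0.
  have e1 : \sum_i (z i 0 * u i - f (z i 0) (y i 0) + alpha / 4 * (u i - g i) ^+ 2)
    = - \sum_i z i 0 * thetastar i 0 - \sum_i f (z i 0) (y i 0) + \sum_i alpha / 4 * (u i - g i) ^+ 2.
    rewrite big_split /= sumrB -sumrN; congr (_ + _ + _); rewrite -sumrN; apply: eq_bigr => i _; rewrite /u; ring.
  have e2 : \sum_i (z i 0 * g i - f (z i 0) (y i 0)) = \sum_i z i 0 * G i 0 - \sum_i f (z i 0) (y i 0).
    by rewrite sumrB; congr (_ - _); apply: eq_bigr => i _; rewrite hG.
  rewrite e1 e2 compl in hlow; lra.
apply/matrixP => i j; rewrite (ord1 j) mxE.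
have hnn : forall k : 'I_m, true -> 0 <= alpha / 4 * (u k - g k) ^+ 2.
  by move=> k _; rewrite mulr_ge0 ?sqr_ge0 // divr_ge0 // ltW.
have hs0 : \sum_i alpha / 4 * (u i - g i) ^+ 2 = 0.
  by apply/le_anti; rewrite hsq sumr_ge0.
have := psumr_eq0P hnn hs0 (i:=i) isT.
move/eqP; rewrite mulf_eq0 sqrf_eq0 subr_eq0 => /orP[|/eqP].
  move=> /eqP h4; have : 0 < alpha / 4 by apply: divr_gt0 => //; lra.
  by rewrite h4 ltxx.
by rewrite /u hG => <-; rewrite opprK.
Qed.

Lemma entry_le p q (M : 'M[R]_(p, q)) i j : `|M i j| <= `|M|.
Proof.
change (`|M i j| <= mx_norm M); rewrite mx_normrE.
by apply/bigmax_geP; right; exists (i, j).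
Qed.

Lemma norm_le_entries p (M : 'cV[R]_p) B : 0 <= B ->
  (forall i, `|M i 0| <= B) -> `|M| <= B.
Proof.
move=> B0 h; change (mx_norm M <= B); rewrite mx_normrE.
apply: bigmax_le => // -[i j] _ /=; by rewrite (ord1 j).
Qed.

Lemma term_le_sum k (F : 'I_k -> R) j : (forall i, 0 <= F i) -> F j <= \sum_i F i.
Proof.
move=> h; rewrite (bigD1 j) //= lerDl; exact: sumr_ge0.
Qed.

Lemma lin_bound p q (M : 'M[R]_(p, q)) (v : 'cV[R]_q) B i : 0 <= B ->
  (forall j, `|v j 0| <= B) ->
  `|(M *m v) i 0| <= (\sum_i0 \sum_j `|M i0 j|) * B.
Proof.
move=> B0 h; rewrite mxE.
apply: le_trans (ler_norm_sum _ _ _) _.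
apply: (@le_trans _ _ (\sum_j `|M i j| * B)).
  by apply: ler_sum => j _; rewrite normrM ler_wpM2l.
rewrite -mulr_suml ler_wpM2r //.
by apply: (@term_le_sum p (fun i0 => \sum_j `|M i0 j|) i) => i0; exact: sumr_ge0.
Qed.

Lemma Theta_bound m n (A : 'M[R]_(m, n)) (y t : 'cV[R]_m) f alpha (x0 x : 'cV[R]_n) :
  loss_assumptions f alpha ->
  dual_feasible A (- gradF f y (A *m x0)) ->
  `|(- gradF f y (A *m x0)) - Theta f A y t x| <=
    (alpha^-1 * (\sum_i \sum_j `|A i j|) +
     (\sum_i \sum_j `|A^T i j|) * (alpha^-1 * (\sum_i \sum_j `|A i j|)) *
       (\sum_j `|(A^T *m t) j 0|^-1) * `|t|) * `|x0 - x|.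
Proof.
move=> [a0 hf] feas.
set NA := \sum_i \sum_j `|A i j|.
set NAT := \sum_i \sum_j `|A^T i j|.
set TQ := \sum_j `|(A^T *m t) j 0|^-1.
set d := `|x0 - x|.
set K := alpha^-1.
have d0 : 0 <= d by exact: normr_ge0.
have K0 : 0 <= K by rewrite invr_ge0 ltW.
have NA0 : 0 <= NA by apply: sumr_ge0 => i _; apply: sumr_ge0.
have NAT0 : 0 <= NAT by apply: sumr_ge0 => i _; apply: sumr_ge0.
have TQ0 : 0 <= TQ by apply: sumr_ge0 => i _; rewrite invr_ge0.
set z0 := - gradF f y (A *m x0).
set zx := - gradF f y (A *m x).
have h1 i : `|(A *m x0) i 0 - (A *m x) i 0| <= NA * d.
  have := @lin_bound _ _ A (x0 - x) d i d0 (fun j => @entry_le _ _ (x0 - x) j 0).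
  by rewrite mulmxBr !mxE.
have h2 i : `|z0 i 0 - zx i 0| <= K * NA * d.
  have -> : z0 i 0 - zx i 0 = gradF f y (A *m x) i 0 - gradF f y (A *m x0) i 0 by rewrite !mxE; ring.
  rewrite !gradF_E.
  have [_ [_ lip]] := hf (y i 0).
  apply: le_trans (lip _ _) _; rewrite -mulrA ler_wpM2l // distrC; exact: h1.
have KNAd0 : 0 <= K * NA * d by rewrite !mulr_ge0.
have h3 j : `|(A^T *m zx) j 0 - (A^T *m z0) j 0| <= NAT * (K * NA * d).
  have hb i : `|(zx - z0) i 0| <= K * NA * d.
    have -> : (zx - z0) i 0 = zx i 0 - z0 i 0 by rewrite !mxE.
    rewrite distrC; exact: h2.
  have := @lin_bound _ _ A^T (zx - z0) (K * NA * d) j KNAd0 hb.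
  by rewrite mulmxBr (_ : (A^T *m zx - A^T *m z0) j 0 = (A^T *m zx) j 0 - (A^T *m z0) j 0) // !mxE.
rewrite /Theta /Xi -/zx.
set c := \big[Num.max/0]_(j < n) _.
have c0 : 0 <= c by exact: bigmax_ge_id.
have hc : c <= NAT * (K * NA * d) * TQ.
  apply: bigmax_le => [|j _]; first by rewrite !mulr_ge0.
  have hp : Num.max 0 ((A^T *m zx) j 0) <= NAT * (K * NA * d).
    apply: le_trans (h3 j); rewrite ge_max normr_ge0 /=.
    have := feas j; rewrite -/z0 => hz.
    apply: le_trans (ler_norm _); lra.
  apply: ler_pM => //; first by rewrite le_max lexx.
  by apply: (@term_le_sum n (fun j0 => `|(A^T *m t) j0 0|^-1) j) => i; rewrite invr_ge0 normr_ge0.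
apply: norm_le_entries => [|i]; first by rewrite mulr_ge0 // addr_ge0 // !mulr_ge0.
have -> : (z0 - (zx + c *: t)) i 0 = (z0 i 0 - zx i 0) - c * t i 0 by rewrite !mxE; ring.
apply: le_trans (ler_normB _ _) _.
rewrite mulrDl; apply: lerD; first by rewrite -mulrA; move: (h2 i); rewrite -mulrA.
rewrite normrM (ger0_norm c0).
have := @entry_le _ _ t i 0; have := normr_ge0 (t i 0).
move=> ht0 hti.
have : c * `|t i 0| <= NAT * (K * NA * d) * TQ * `|t|.
  by apply: ler_pM.
suff -> : NAT * (K * NA) * TQ * `|t| * d = NAT * (K * NA * d) * TQ * `|t| by [].
ring.
Qed.
End S.

Theorem proposition1 (R : realType) (m n : nat) (A : 'M[R]_(m, n))
  (y : 'cV[R]_m) (f : R -> R -> R) (alpha : R)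
  (xstar : 'cV[R]_n) (thetastar : 'cV[R]_m) (t : 'cV[R]_m) :
  loss_assumptions f alpha ->
  (* x* is a primal solution *)
  nonneg_vec xstar ->
  (forall x : 'cV[R]_n, nonneg_vec x ->
     primal_obj f A y xstar <= primal_obj f A y x) ->
  (* theta* is the dual solution *)
  dual_feasible A thetastar ->
  (forall theta, dual_feasible A theta ->
     (dual_obj f y theta <= dual_obj f y thetastar)%E) ->
  (* t in Int(F_D) *)
  interior (dual_feasible A) t ->
  (forall x : 'cV[R]_n, nonneg_vec x -> dual_feasible A (Theta f A y t x)) /\
  (Theta f A y t @ within [set x : 'cV[R]_n | nonneg_vec x] (nbhs xstar)
     --> thetastar).
Proof.
move=> hl hx hopt hfeas hmax ht.
split; first by move=> x _; exact: Xi_feasible.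
have eq := @dual_unique R m n A y f alpha xstar thetastar hl hx hopt hfeas hmax.
have feasG : dual_feasible A (- gradF f y (A *m xstar)) by rewrite -eq.
apply: cvg_within_filter.
apply/cvgrPdist_le => eps eps0.
set C := (alpha^-1 * (\sum_i \sum_j `|A i j|) +
     (\sum_i \sum_j `|A^T i j|) * (alpha^-1 * (\sum_i \sum_j `|A i j|)) *
       (\sum_j `|(A^T *m t) j 0|^-1) * `|t|).
have a0 := hl.1.
have C0 : 0 <= C.
  have s1 : 0 <= \sum_i \sum_j `|A i j| by apply: sumr_ge0 => i _; apply: sumr_ge0.
  have s2 : 0 <= \sum_i \sum_j `|A^T i j| by apply: sumr_ge0 => i _; apply: sumr_ge0.
  have s3 : 0 <= \sum_j `|(A^T *m t) j 0|^-1 by apply: sumr_ge0 => i _; rewrite invr_ge0.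
  have s4 : 0 <= alpha^-1 by rewrite invr_ge0 ltW.
  by rewrite /C addr_ge0 // !mulr_ge0.
have C1 : 0 < C + 1 by rewrite ltr_wpDl.
have hn := (cvgrPdist_le (F := nbhs xstar) (fun x => x) xstar).1 cvg_id (eps / (C + 1)) (divr_gt0 eps0 C1).
near=> x.
have hxx : `|xstar - x| <= eps / (C + 1) by near: x; exact: hn.
have := @Theta_bound R m n A y t f alpha xstar x hl feasG.
rewrite -eq -/C => hb; apply: le_trans hb _.
apply: (@le_trans _ _ (C * (eps / (C + 1)))); first by rewrite ler_wpM2l.
rewrite mulrA ler_pdivrMr //; nra.
Unshelve. all: by end_near.
Qed.
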